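(* For every natural number $n\ge 1$, $p_{min}(n+1)=p_{min}(n)\pm 1$. Moreover, for every integer $k\ge 1$, $p_{min}(n)-1\le p_{min}(n+k)\le p_{min}(n)+k$, and if $p_{min}(n+1)=p_{min}(n)+1$, then $p_{min}(n)\le p_{min}(n+k)$.
   Context: A polyiamond is a planar shape formed by gluing together finitely many congruent (closed) equilateral triangles (tiles) of the regular triangular lattice along their edges: any two tiles that intersect meet in an entire edge, and the union has connected interior. The perimeter $p(A)$ of a polyiamond $A$ is the number of lattice edges lying on the topological boundary of $A$. For $n\ge1$, $p_{min}(n)$ is the minimum of $p(A)$ over all polyiamonds $A$ with exactly $n$ tiles. *)

(* Defs.v *)
From mathcomp Require Import all_boot all_order all_algebra.
From mathcomp Require Import boolp.
Set Implicit Arguments. Unset Strict Implicit. Unset Printing Implicit Defensive.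
Import GRing.Theory Num.Theory.

(* In lattice coordinates (basis
   vectors e1, e2 at 60 degrees), the tile (x, y, false) is the "up" triangle
   with vertices (x,y), (x+1,y), (x,y+1); the tile (x, y, true) is the "down"
   triangle with vertices (x+1,y), (x,y+1), (x+1,y+1).  Every lattice triangle
   is exactly one such tile. *)
Definition tile := (int * int * bool)%type.

(* The three tiles sharing an entire edge with a given tile. *)
Definition nbrs (t : tile) : seq tile :=
  let: (x, y, b) := t in
  if b then [:: (x, y, false); (x + 1, y, false); (x, y + 1, false)]%R
  else [:: (x, y, true); (x - 1, y, true); (x, y - 1, true)]%R.

Definition adj : rel tile := fun t u => u \in nbrs t.

(* A polyiamond: a nonempty finite set of tiles (duplicate-free list) whose
   union has connected interior, i.e. the edge-adjacency graph on the tiles is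
   connected. *)
Definition polyiamond (A : seq tile) : Prop :=
  [/\ uniq A, A != [::] &
      forall a b, a \in A -> b \in A ->
        exists s : seq tile, [/\ path adj a s, last a s = b & all (mem A) s]].

(* Perimeter: number of lattice edges on the boundary of the union = number of
   edges having exactly one adjacent tile in A = number of pairs (t, u) with
   t in A, u an edge-neighbour of t not in A. *)
Definition perimeter (A : seq tile) : nat :=
  sumn [seq count (fun u => u \notin A) (nbrs t) | t <- A].

Definition attained (n p : nat) : Prop :=
  exists A, polyiamond A /\ size A = n /\ perimeter A = p.

(* p_min(n): least perimeter of a polyiamond with n tiles (0 if none exist,
   which only happens for n = 0). *)
Definition pmin (n : nat) : nat :=
  match pselect (exists p, (fun q => `[< attained n q >]) p) with
  | left h => ex_minn h
  | right _ => 0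
  end.

(* Main.v *)
Require Import Defs.
From mathcomp Require Import all_boot all_order all_algebra.
From mathcomp Require Import boolp.
From mathcomp Require Import zify.
Set Implicit Arguments. Unset Strict Implicit. Unset Printing Implicit Defensive.
Import GRing.Theory Num.Theory Order.TTheory.

Lemma nbrs_uniq t : uniq (nbrs t).
Proof. case: t => [[x y] []]; rewrite /= !inE !xpair_eqE /=; lia. Qed.

Lemma nbrs_irr t : (t \in nbrs t) = false.
Proof. case: t => [[x y] []]; rewrite /= !inE !xpair_eqE /=; lia. Qed.

Lemma adj_sym t u : (u \in nbrs t) = (t \in nbrs u).
Proof.
case: t => [[x y] []]; case: u => [[x' y'] []]; rewrite /= !inE !xpair_eqE /=;
  apply/idP/idP; lia.
Qed.

Lemma size_nbrs t : size (nbrs t) = 3.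
Proof. by case: t => [[x y] []]. Qed.

Lemma count_add (T : Type) (p q r : pred T) s :
  (forall u, p u + q u = r u) -> count p s + count q s = count r s.
Proof.
move=> H; elim: s => //= a s IH; rewrite -H -IH; lia.
Qed.

Lemma sumn_map_add (T : Type) (f g h : T -> nat) s :
  (forall u, f u + g u = h u) -> sumn (map f s) + sumn (map g s) = sumn (map h s).
Proof.
move=> H; elim: s => //= a s IH; rewrite -H -IH; lia.
Qed.

Lemma count_sym (A : seq tile) t : uniq A ->
  count (mem A) (nbrs t) = count (mem (nbrs t)) A.
Proof.
move=> uA; rewrite -!size_filter; apply/perm_size/uniq_perm.
- exact/filter_uniq/nbrs_uniq.
- exact/filter_uniq.
by move=> u; rewrite !mem_filter andbC.
Qed.

Lemma perim_cons (A : seq tile) t : uniq A -> t \notin A ->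
  perimeter (t :: A) + 2 * count (mem A) (nbrs t) = perimeter A + 3.
Proof.
move=> uA tA; rewrite /perimeter /=.
set a := count (fun u => u \notin t :: A) (nbrs t).
set b := sumn [seq count (fun u => u \notin t :: A) (nbrs t') | t' <- A].
set c := sumn [seq count (fun u => u \notin A) (nbrs t') | t' <- A].
have E1 : a + count (mem A) (nbrs t) = 3.
  rewrite /a.
  rewrite (@eq_in_count _ _ (predC (mem A))); first by rewrite addnC count_predC size_nbrs.
  move=> u ut; rewrite /= inE; have -> // : (u == t) = false.
  by apply/negbTE; apply: contraTneq ut => ->; rewrite nbrs_irr.
have E2 : b + count (mem A) (nbrs t) = c.
  rewrite /b /c.
  rewrite count_sym // -sumn_count.
  apply: sumn_map_add => t'.
  rewrite /= adj_sym -(count_uniq_mem _ (nbrs_uniq t')).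
  apply: count_add => u /=; rewrite inE.
  case: eqP => [->|_] /=; first by rewrite tA.
  by rewrite addn0.
clearbody a b c; move: E1 E2; set k := count _ (nbrs t); lia.
Qed.

Lemma perim_perm (A B : seq tile) : perm_eq A B -> perimeter A = perimeter B.
Proof.
move=> pAB; have mAB : A =i B := perm_mem pAB.
rewrite /perimeter.
rewrite (@eq_map _ _ _ (fun t => count (fun u => u \notin B) (nbrs t))); last first.
  by move=> t; apply: eq_count => u; rewrite mAB.
exact/perm_sumn/perm_map.
Qed.

Lemma perim_rem (A : seq tile) v : uniq A -> v \in A ->
  perimeter (rem v A) + 3 = perimeter A + 2 * count (mem A) (nbrs v).
Proof.
move=> uA vA.
rewrite (perim_perm (perm_to_rem vA)) -(perim_cons (rem_uniq v uA) (negbT (mem_rem_uniqF v uA))).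
congr (_ + 2 * _); apply: eq_in_count => u uv /=.
rewrite (mem_rem_uniq _ uA) inE.
have -> // : (u != v) by apply: contraTneq uv => ->; rewrite nbrs_irr.
Qed.

Lemma odd_aux p q k : p + 2 * k = q + 3 -> odd p = ~~ odd q.
Proof.
move/(congr1 odd); rewrite !oddD /=.
by case: (odd p); case: (odd k); case: (odd q).
Qed.

Lemma perim_parity (A : seq tile) : uniq A -> odd (perimeter A) = odd (size A).
Proof.
elim: A => // t A IH; rewrite cons_uniq => /andP [tA uA].
rewrite (odd_aux (perim_cons uA tA)) IH //.
Qed.


Inductive reach (P : tile -> bool) : tile -> tile -> Prop :=
| reach0 a : P a -> reach P a a
| reachS a b c : P a -> b \in nbrs a -> reach P b c -> reach P a c.

Lemma reach_P P a b : reach P a b -> P a /\ P b.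
Proof. by elim=> // a' b' c Pa _ _ [_ Pc]. Qed.

Lemma reach_trans P a b c : reach P a b -> reach P b c -> reach P a c.
Proof.
elim=> // a' b' c' Pa ab _ IH /IH; exact: reachS.
Qed.

Lemma reach_snoc P a b c : reach P a b -> c \in nbrs b -> P c -> reach P a c.
Proof.
move=> rab bc Pc; have [_ Pb] := reach_P rab.
apply: (reach_trans rab); exact: reachS bc (reach0 Pc).
Qed.

Lemma reach_sym P a b : reach P a b -> reach P b a.
Proof.
elim=> [a' Pa|a' b' c Pa ab _ IH]; first exact: reach0.
by apply: reach_snoc IH _ Pa; rewrite -adj_sym.
Qed.

Lemma reach_mono (P Q : tile -> bool) a b : (forall t, P t -> Q t) ->
  reach P a b -> reach Q a b.
Proof.
move=> PQ; elim=> [a' /PQ|a' b' c /PQ Qa ab _ IH]; first exact: reach0.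
exact: reachS ab IH.
Qed.

Definition conn (P : tile -> bool) := forall a b, P a -> P b -> reach P a b.

Lemma poly_conn A : polyiamond A <->
  [/\ uniq A, A != [::] & conn (fun t => t \in A)].
Proof.
split=> [[uA nA H]|[uA nA H]]; split=> // a b aA bA.
- have [s [ps <- alls]] := H a b aA bA.
  elim: s a aA ps alls {H bA} => [|c s IH] a aA /=; first by move=> _ _; exact: reach0.
  move=> /andP [ac ps] /andP [cA alls].
  exact: reachS ac (IH c cA ps alls).
- elim: (H a b aA bA) => [a' _|a' b' c Pa ab rbc [s [ps ls alls]]].
    by exists [::].
  have [Pb _] := reach_P rbc.
  by exists (b' :: s); rewrite /= ps ls alls Pb /adj ab.
Qed.

Lemma leaf_nc (P : tile -> bool) v : conn P ->
  (forall p q, P p -> P q -> p \in nbrs v -> q \in nbrs v -> p = q) ->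
  conn (fun t => P t && (t != v)).
Proof.
move=> cP uN a b /andP [Pa av] /andP [Pb bv].
set P' := fun t => P t && (t != v).
suff H : forall a c, reach P a c -> c != v ->
   (a != v -> reach P' a c) /\ (a = v -> forall p, P p -> p \in nbrs v -> reach P' p c).
  by apply: (H a b (cP a b Pa Pb) bv).1.
move=> {a b Pa av Pb bv} a c; elim=> [a' Pa' cv|a' a1 c' Pa' aa1 r IH cv].
  split=> [av|av]; first by apply: reach0; rewrite /P' Pa' av.
  by move: cv; rewrite av eqxx.
have [IH1 IH2] := IH cv.
split=> [av|av p Pp pv].
  case: (eqVneq a1 v) => [a1v|a1v].
    by apply: IH2 => //; rewrite -a1v -adj_sym.
  by apply: (reachS _ aa1 (IH1 a1v)); rewrite /P' Pa' av.
have [Pa1 _] := reach_P r.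
rewrite -av in pv; have -> := uN p a1 Pp Pa1 _ _; rewrite ?av //; last by rewrite -av.
  apply: IH1; apply: contraTneq aa1 => ->; rewrite -av nbrs_irr //.
by rewrite -av.
Qed.

Definition nc (A : seq tile) u := conn (fun t => (t \in A) && (t != u)).

Definition pendant (A : seq tile) w (C : tile -> bool) :=
  [/\ w \in A, ~~ C w, (exists c, C c), (forall c, C c -> c \in A) &
      (forall c a, C c -> a \in A -> a \in nbrs c -> C a \/ a = w)].

Lemma reach_avoid (A : seq tile) (C : tile -> bool) w :
  (forall c a, C c -> a \in A -> a \in nbrs c -> C a \/ a = w) -> w \in A -> ~~ C w ->
  forall z c, reach (fun t => t \in A) z c -> c = w -> ~~ C z ->
  reach (fun t => (t \in A) && ~~ C t) z c.
Proof.
move=> cl wA Cw z c; elim=> [a Pa _ Ca|a b c' Pa ab r IH cw Ca].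
  by apply: reach0; rewrite Pa Ca.
case: (boolP (C b)) => Cb.
  have ba : a \in nbrs b by rewrite adj_sym.
  have [Ca'|aw] := cl b a Cb Pa ba.
    by move: Ca; rewrite Ca'.
  rewrite aw cw; apply: reach0; by rewrite wA Cw.
by apply: reachS ab (IH cw Cb); rewrite Pa Ca.
Qed.

Lemma count_lt (A : seq tile) (K C : tile -> bool) u :
  (forall z, K z -> C z) -> C u -> ~~ K u -> u \in A -> count K A < count C A.
Proof.
move=> KC Cu Ku; elim: A => // x s IH; rewrite inE /=.
have sc := sub_count KC s.
case: (eqVneq u x) => [<- _|_ /= us].
  by rewrite Cu (negbTE Ku); lia.
have := IH us; case: (boolP (K x)) => Kx; first rewrite (KC _ Kx); case: (C x) => /=; lia.
Qed.

Lemma pendant_min (A : seq tile) : conn (fun t => t \in A) ->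
  forall w C, pendant A w C ->
  exists w' C', pendant A w' C' /\ forall u, C' u -> nc A u.
Proof.
move=> cA.
suff H : forall k w C, count C A <= k -> pendant A w C ->
  exists w' C', pendant A w' C' /\ forall u, C' u -> nc A u.
  by move=> w C; apply: H (leqnn _).
elim=> [|k IH] w C.
  move=> hk [wA Cw [c Cc] CA cl].
  have : has C A by apply/hasP; exists c => //; exact: CA.
  by rewrite has_count; lia.
move=> hk pC.
case: (pselect (exists u, C u /\ ~ nc A u)) => [[u [Cu ncu]]|nex]; last first.
  exists w, C; split=> // u Cu.
  by apply: contrapT => ncu; apply: nex; exists u.
have [wA Cw [c Cc] CA cl] := pC.
set P' := fun t => (t \in A) && (t != u).
have uA := CA u Cu.
have wu : w != u by apply: contraNneq Cw => ->.
have P'w : P' w by rewrite /P' wA wu.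
have [a [b [P'a [P'b nab]]]] : exists a b, P' a /\ P' b /\ ~ reach P' a b.
  apply: contrapT => H; apply: ncu => a b Pa Pb.
  apply: contrapT => nr; apply: H; by exists a, b.
pose K := fun z => `[< P' z /\ ~ reach P' w z >].
have KP z : K z -> P' z /\ ~ reach P' w z by move/asboolP.
have KC z : K z -> C z.
  move/KP => [P'z nwz]; apply: contrapT => /negP Cz.
  move: P'z; rewrite /P' => /andP [zA _].
  have r := reach_avoid cl wA Cw (cA z w zA wA) erefl Cz.
  apply: nwz; apply: reach_sym; apply: reach_mono r => t /andP [tA Ct].
  by rewrite /P' tA; apply: contraNneq Ct => ->.
have Ku : ~~ K u.
  by apply/negP => /KP [] /andP [_]; rewrite eqxx.
have pK : pendant A u K.
  split=> //.
  - case: (pselect (reach P' w a)) => ra; last by exists a; apply/asboolP.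
    case: (pselect (reach P' w b)) => rb; last by exists b; apply/asboolP.
    by exfalso; apply: nab; apply: reach_trans (reach_sym ra) rb.
  - by move=> z /KP [] /andP [].
  - move=> c' a' Kc a'A a'c.
    case: (eqVneq a' u) => [->|a'u]; [by right|left].
    apply/asboolP; split; first by rewrite /P' a'A a'u.
    move=> r; have [/KP [P'c nwc]] := Kc; apply: nwc.
    by apply: reach_snoc r _ P'c; rewrite -adj_sym.
have := count_lt KC Cu Ku uA.
move=> lt; apply: (IH u K) => //; lia.
Qed.


Definition le (t u : tile) : bool :=
  let: (x, y, b) := t in let: (x', y', b') := u in
  ((y < y') || ((y == y') && ((x < x') || ((x == x') && (~~ b || b')))))%R.

Lemma le_total : total le.
Proof. move=> [[x y] b] [[x' y'] b']; rewrite /le; case: b; case: b' => /=; lia. Qed.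

Lemma le_trans : transitive le.
Proof.
move=> [[x y] b] [[x' y'] b'] [[x'' y''] b''].
rewrite /le; case: b; case: b'; case: b'' => /=; lia.
Qed.

Lemma le_anti t u : le t u -> le u t -> t = u.
Proof.
case: t => [[x y] b]; case: u => [[x' y'] b']; rewrite /le => h1 h2.
have ey : y = y' by lia.
have ex : x = x' by lia.
by subst; congr (_, _); move: h1 h2; case: b; case: b'; rewrite /= ?ltxx ?eqxx.
Qed.

Lemma ex_max (r : rel tile) (S : tile -> bool) (A : seq tile) :
  total r -> transitive r -> has S A ->
  exists m, [/\ m \in A, S m & forall t, t \in A -> S t -> r t m].
Proof.
move=> tot tr; elim: A => //= x s IH.
case: (boolP (has S s)) => [hs _|hs /= Sx].
  have [m [ms Sm Hm]] := IH hs.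
  case: (boolP (S x)) => Sx.
    case/orP: (tot x m) => xm.
      exists m; split; rewrite ?inE ?ms ?orbT // => t; rewrite inE => /orP [/eqP ->|ts] //.
      exact: Hm.
    exists x; split; rewrite ?inE ?eqxx // => t; rewrite inE => /orP [/eqP ->|ts] St.
      by case/orP: (tot x x).
    exact: tr (Hm t ts St) xm.
  exists m; split; rewrite ?inE ?ms ?orbT // => t; rewrite inE => /orP [/eqP ->|ts] //.
    by rewrite (negbTE Sx).
  exact: Hm.
rewrite orbF in Sx.
exists x; split; rewrite ?inE ?eqxx // => t; rewrite inE => /orP [/eqP ->|ts] St.
  by case/orP: (tot x x).
by move/hasPn: hs => /(_ t ts); rewrite St.
Qed.

Definition deg (A : seq tile) t := count (fun u => u \in A) (nbrs t).

Definition goodv (A : seq tile) (C : tile -> bool) :=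
  exists v, C v /\ (deg A v <= 1 \/
    (deg A v = 2 /\ exists a, [/\ C a, a \in nbrs v & deg A a <= 2])).

Lemma out_ext (A : seq tile) w (C : tile -> bool) (r : rel tile) m c n :
  pendant A w C -> C c -> (forall t, t \in A -> C t || (t == w) -> r t m) ->
  n \in nbrs c -> ~~ r n m -> n \notin A.
Proof.
move=> [wA Cw _ CA cl] Cc Hm nm rnm; apply/negP => nA.
have := Hm n nA; rewrite (negbTE rnm); apply/implyP/negPn.
by have [->|->] := cl c n Cc nA nm; rewrite ?eqxx ?orbT.
Qed.

Lemma max_case (A : seq tile) w (C : tile -> bool) m :
  pendant A w C -> C m -> (forall t, t \in A -> C t || (t == w) -> le t m) ->
  goodv A C \/ exists x y, [/\ m = (x, y, false), w = (x - 1, y, true)%R &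
                              (x, y - 1, true)%R \in A].
Proof.
move=> pC Cm Hm; have [wA Cw _ CA cl] := pC.
have out c n : C c -> n \in nbrs c -> ~~ le n m -> n \notin A.
  by move=> Cc; apply: out_ext pC Cc Hm.
move: m Cm Hm out => [[x y] []] Cm Hm out.
  left; exists (x, y, true); split=> //; left.
  rewrite /deg /=.
  rewrite (negbTE (out _ (x + 1, y, false)%R Cm _ _)); last 2 first.
  - by rewrite /= !inE eqxx orbT.
  - by rewrite /le; lia.
  rewrite (negbTE (out _ (x, y + 1, false)%R Cm _ _)); last 2 first.
  - by rewrite /= !inE eqxx !orbT.
  - by rewrite /le; lia.
  by case: (_ \in A).
have n0 : (x, y, true) \notin A.
  by apply: (out _ _ Cm); [rewrite /= !inE eqxx | rewrite /le; lia].
case: (boolP ((x - 1, y, true)%R \in A)) => aA; last first.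
  by left; exists (x, y, false); split=> //; left; rewrite /deg /= (negbTE aA) (negbTE n0); case: (_ \in A).
case: (boolP ((x, y - 1, true)%R \in A)) => bA; last first.
  by left; exists (x, y, false); split=> //; left; rewrite /deg /= (negbTE bA) (negbTE n0); case: (_ \in A).
have anb : (x - 1, y, true)%R \in nbrs (x, y, false) by rewrite /= !inE eqxx orbT.
have [Ca|aw] := cl _ _ Cm aA anb; last by right; exists x, y; split.
left; exists (x, y, false); split=> //; right; split.
  by rewrite /deg /= aA bA (negbTE n0).
exists (x - 1, y, true)%R; split=> //.
have n2 : (x - 1, y + 1, false)%R \notin A.
  by apply: (out _ _ Ca); [rewrite /= !inE eqxx !orbT | rewrite /le; lia].
rewrite /deg /= (negbTE n2); by case: (_ \in A); case: (_ \in A).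
Qed.

Lemma min_case (A : seq tile) w (C : tile -> bool) m :
  pendant A w C -> C m -> (forall t, t \in A -> C t || (t == w) -> le m t) ->
  goodv A C \/ exists x y, [/\ m = (x, y, true), w = (x + 1, y, false)%R &
                              (x, y + 1, false)%R \in A].
Proof.
move=> pC Cm Hm; have [wA Cw _ CA cl] := pC.
have out c n : C c -> n \in nbrs c -> ~~ le m n -> n \notin A.
  by move=> Cc; apply: (@out_ext A w C (fun a b => le b a) m c n pC Cc Hm).
move: m Cm Hm out => [[x y] []] Cm Hm out; last first.
  left; exists (x, y, false); split=> //; left.
  rewrite /deg /=.
  rewrite (negbTE (out _ (x - 1, y, true)%R Cm _ _)); last 2 first.
  - by rewrite /= !inE eqxx orbT.
  - by rewrite /le; lia.
  rewrite (negbTE (out _ (x, y - 1, true)%R Cm _ _)); last 2 first.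
  - by rewrite /= !inE eqxx !orbT.
  - by rewrite /le; lia.
  by case: (_ \in A).
have n0 : (x, y, false) \notin A.
  by apply: (out _ _ Cm); [rewrite /= !inE eqxx | rewrite /le; lia].
case: (boolP ((x + 1, y, false)%R \in A)) => aA; last first.
  by left; exists (x, y, true); split=> //; left; rewrite /deg /= (negbTE aA) (negbTE n0); case: (_ \in A).
case: (boolP ((x, y + 1, false)%R \in A)) => bA; last first.
  by left; exists (x, y, true); split=> //; left; rewrite /deg /= (negbTE bA) (negbTE n0); case: (_ \in A).
have anb : (x + 1, y, false)%R \in nbrs (x, y, true) by rewrite /= !inE eqxx orbT.
have [Ca|aw] := cl _ _ Cm aA anb; last by right; exists x, y; split.
left; exists (x, y, true); split=> //; right; split.
  by rewrite /deg /= aA bA (negbTE n0).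
exists (x + 1, y, false)%R; split=> //.
have n2 : (x + 1, y - 1, true)%R \notin A.
  by apply: (out _ _ Ca); [rewrite /= !inE eqxx !orbT | rewrite /le; lia].
rewrite /deg /= (negbTE n2); by case: (_ \in A); case: (_ \in A).
Qed.

Lemma key (A : seq tile) w (C : tile -> bool) : pendant A w C -> goodv A C.
Proof.
move=> pC; have [wA Cw [c Cc] CA cl] := pC.
set S := fun t => C t || (t == w).
have hS : has S A by apply/hasP; exists w => //; rewrite /S eqxx orbT.
have [m [mA Sm Hm]] := ex_max le_total le_trans hS.
have [m' [m'A Sm' Hm']] := ex_max (r := fun a b => le b a)
   (fun a b => le_total b a) (fun a b c h1 h2 => le_trans h2 h1) hS.
case: (boolP (C m)) => Cm.
  have [//|[x [y [em ew bA]]]] := max_case pC Cm Hm.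
  have bS : S (x, y - 1, true)%R.
    have bn : (x, y - 1, true)%R \in nbrs m by rewrite em /= !inE eqxx !orbT.
    by have [Cb|->] := cl _ _ Cm bA bn; rewrite /S ?Cb ?eqxx ?orbT.
  case: (boolP (C m')) => Cm'.
    have [//|[u [v [_ ew' _]]]] := min_case pC Cm' Hm'.
    by move: ew'; rewrite ew.
  move: Sm'; rewrite /S (negbTE Cm') /= => /eqP em'.
  have := Hm' _ bA bS; rewrite /= em' ew /le; lia.
move: Sm; rewrite /S (negbTE Cm) /= => /eqP em.
have Cm' : C m'.
  apply: contraNT Cw => Cm'; move: Sm'; rewrite /S (negbTE Cm') /= => /eqP em'.
  have cA := CA c Cc.
  have Sc : S c by rewrite /S Cc.
  have h1 := Hm c cA Sc.
  have h2 := Hm' c cA Sc.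
  by rewrite -em -(le_anti h1); rewrite ?Cc // em -em'.
have [//|[u [v [em' ew bA]]]] := min_case pC Cm' Hm'.
have bS : S (u, v + 1, false)%R.
  have bn : (u, v + 1, false)%R \in nbrs m' by rewrite em' /= !inE eqxx !orbT.
  by have [Cb|->] := cl _ _ Cm' bA bn; rewrite /S ?Cb ?eqxx ?orbT.
have := Hm _ bA bS; rewrite /= em ew /le; lia.
Qed.


Lemma perim_rem' (A : seq tile) v : uniq A -> v \in A ->
  perimeter (rem v A) + 3 = perimeter A + 2 * deg A v.
Proof. exact: perim_rem. Qed.

Lemma perim_cons' (A : seq tile) t : uniq A -> t \notin A ->
  perimeter (t :: A) + 2 * deg A t = perimeter A + 3.
Proof. exact: perim_cons. Qed.

Lemma G_poly (B : seq tile) : polyiamond B -> 2 <= size B ->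
  exists v, [/\ v \in B, nc B v &
    (deg B v <= 1 \/ (deg B v = 2 /\ exists a, [/\ a \in B, a \in nbrs v & deg B a <= 2]))].
Proof.
move=> /poly_conn [uB nB cB] sB.
case: B uB nB cB sB => // w [//|c B''] uB _ cB sB.
set B := w :: c :: B'' in uB cB *.
pose C := fun t => (t \in B) && (t != w).
have pC : pendant B w C.
  split.
  - by rewrite inE eqxx.
  - by rewrite /C eqxx andbF.
  - exists c; rewrite /C !inE eqxx orbT /=.
    move: uB; rewrite /B /= inE negb_or => /andP [/andP [wc _] _].
    by rewrite eq_sym.
  - by move=> c0 /andP [].
  - move=> c0 a _ aB _; case: (eqVneq a w) => [->|aw]; [by right|left].
    by rewrite /C aB aw.
have [w' [C' [pC' ncC']]] := pendant_min cB pC.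
have [_ _ _ CA _] := pC'.
have [v [Cv H]] := key pC'.
exists v; split; [exact: CA | exact: ncC' |].
case: H => [->|[dv [a [Ca av da]]]]; [by left | right; split => //].
by exists a; split => //; exact: CA.
Qed.

Lemma rem_poly (B : seq tile) v : polyiamond B -> v \in B -> nc B v -> 2 <= size B ->
  polyiamond (rem v B).
Proof.
move=> /poly_conn [uB nB cB] vB ncv sB; apply/poly_conn; split.
- exact: rem_uniq.
- by rewrite -size_eq0 size_rem //; case: (size B) sB => // [[]].
move=> a b; rewrite !(mem_rem_uniq _ uB) !inE => /andP [av aB] /andP [bv bB].
apply: reach_mono (ncv a b _ _); last 2 first.
- by rewrite aB av.
- by rewrite bB bv.
by move=> t /andP [tB tv]; rewrite (mem_rem_uniq _ uB) inE tB tv.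
Qed.

Lemma Lone (B : seq tile) : polyiamond B -> 2 <= size B ->
  exists B', [/\ polyiamond B', size B' = (size B).-1 & perimeter B' <= perimeter B + 1].
Proof.
move=> pB sB; have [v [vB ncv H]] := G_poly pB sB.
have uB : uniq B by case: pB.
exists (rem v B); split.
- exact: rem_poly.
- exact: size_rem.
have := perim_rem' uB vB.
case: H => [|[-> _]]; lia.
Qed.

Lemma Ltwo (B : seq tile) : polyiamond B -> 3 <= size B ->
  exists B', [/\ polyiamond B', size B' = (size B).-2 & perimeter B' <= perimeter B].
Proof.
move=> pB sB; have [v [vB ncv H]] := G_poly pB (ltnW sB).
have uB : uniq B by case: pB.
have pB1 := rem_poly pB vB ncv (ltnW sB).
have s1 := size_rem vB.
have e1 := perim_rem' uB vB.
have sB1 : 2 <= size (rem v B) by rewrite s1; case: (size B) sB => // [[|[]]].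
case: H => [dv|[dv [a [aB av da]]]].
  have [B2 [pB2 s2 e2]] := Lone pB1 sB1.
  exists B2; split => //; first by rewrite s2 s1.
  lia.
set B1 := rem v B in pB1 s1 e1 sB1 *.
have uB1 : uniq B1 by case: pB1.
have mB1 u : (u \in B1) = (u != v) && (u \in B) by rewrite /B1 (mem_rem_uniq _ uB) inE.
have aB1 : a \in B1.
  by rewrite mB1 aB andbT; apply: contraTneq av => ->; rewrite nbrs_irr.
have d1 : deg B1 a + 1 = deg B a.
  have -> : 1 = count (pred1 v) (nbrs a).
    by rewrite (count_uniq_mem _ (nbrs_uniq a)) -adj_sym av.
  apply: count_add => u /=; rewrite mB1.
  by case: (eqVneq u v) => [->|nuv] /=; rewrite ?vB ?addn0.
have leaf : forall p q, p \in B1 -> q \in B1 -> p \in nbrs a -> q \in nbrs a -> p = q.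
  move=> p q pB1' q' pa qa; apply/eqP; apply: contraT => pq.
  have : size [:: p; q] <= size (filter (fun u => u \in B1) (nbrs a)).
    apply: uniq_leq_size; first by rewrite /= inE pq.
    by move=> u; rewrite !inE mem_filter => /orP [] /eqP ->; rewrite ?pB1' ?q' ?pa ?qa.
  rewrite size_filter /= => h; have h' : 2 <= deg B1 a by []. lia.
have ncA : nc B1 a.
  have [_ _ cB1] := (poly_conn B1).1 pB1.
  exact: leaf_nc cB1 leaf.
have pB2 := rem_poly pB1 aB1 ncA sB1.
have e2 := perim_rem' uB1 aB1.
exists (rem a B1); split => //; first by rewrite size_rem // s1.
lia.
Qed.

Definition bigger (t : tile) : tile :=
  let: (x, y, b) := t in if b then (x, y + 1, false)%R else (x, y, true).

Lemma bigger_nbr t : t \in nbrs (bigger t).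
Proof. case: t => [[x y] []]; rewrite /= !inE !xpair_eqE /=; lia. Qed.

Lemma bigger_gt t : ~~ le (bigger t) t.
Proof. case: t => [[x y] []]; rewrite /le /=; lia. Qed.

Lemma arith1 p q d : p + 2 * d = q + 3 -> 0 < d -> p <= q + 1.
Proof. lia. Qed.

Lemma Grow (A : seq tile) : polyiamond A ->
  exists A', [/\ polyiamond A', size A' = (size A).+1 & perimeter A' <= perimeter A + 1].
Proof.
move=> /poly_conn [uA nA cA].
have hA : has predT A by case: A nA {uA cA}.
have [m [mA _ Hm]] := ex_max le_total le_trans hA.
set t := bigger m.
have tA : t \notin A by apply/negP => /Hm /(_ isT); apply/negP/bigger_gt.
have e := perim_cons' uA tA.
have d : 0 < deg A t by rewrite /deg -has_count; apply/hasP; exists m => //; exact: bigger_nbr.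
exists (t :: A); split => //; last exact: arith1 e d.
apply/poly_conn; split => //; first by rewrite /= tA.
have rm a : a \in t :: A -> reach (fun u => u \in t :: A) a m.
  rewrite inE => /orP [/eqP ->|aA].
    apply: reachS; first by rewrite inE eqxx.
      exact: bigger_nbr.
    by apply: reach0; rewrite inE mA orbT.
  apply: reach_mono (cA a m aA mA) => u uA'; by rewrite inE uA' orbT.
move=> a b aA bA; exact: reach_trans (rm a aA) (reach_sym (rm b bA)).
Qed.


Lemma exists_poly n : 0 < n -> exists A, polyiamond A /\ size A = n.
Proof.
elim: n => // [[|k] IH] _.
  exists [:: (0%R, 0%R, false)]; split => //.
  apply/poly_conn; split => // a b; rewrite !inE => /eqP -> /eqP ->.
  by apply: reach0; rewrite inE.
have [A [pA sA]] := IH isT.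
have [A' [pA' sA' _]] := Grow pA.
by exists A'; rewrite sA' sA.
Qed.

Lemma pminP n : (exists A, polyiamond A /\ size A = n) ->
  attained n (pmin n) /\ forall p, attained n p -> pmin n <= p.
Proof.
move=> [A [pA sA]]; rewrite /pmin; case: (pselect _) => [h|h]; last first.
  by exfalso; apply: h; exists (perimeter A); apply/asboolP; exists A.
case: ex_minnP => m /asboolP Pm Hm; split => // p Pp; apply: Hm; exact/asboolP.
Qed.

Lemma desc n : 0 < n -> forall j,
  (forall B, polyiamond B -> size B = n + j -> pmin n <= perimeter B + odd j) /\
  (forall B, polyiamond B -> size B = n + j.+1 -> pmin n <= perimeter B + odd j.+1).
Proof.
move=> n0; have [_ mn] := pminP (exists_poly n0).
elim=> [|j [IH1 IH2]].
  split=> B pB sB.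
    by rewrite addn0; apply: mn; exists B; rewrite sB addn0.
  have s2 : 2 <= size B by rewrite sB; lia.
  have [B' [pB' sB' eB']] := Lone pB s2.
  have sB'' : size B' = n by rewrite sB' sB addn1.
  have : pmin n <= perimeter B' by apply: mn; exists B'.
  rewrite /=; lia.
split => // B pB sB.
have s3 : 3 <= size B by rewrite sB; lia.
have [B' [pB' sB' eB']] := Ltwo pB s3.
have sB'' : size B' = n + j by rewrite sB' sB; lia.
have := IH1 B' pB' sB''.
rewrite /= negbK; lia.
Qed.

Theorem lemma1 (n : nat) : 1 <= n ->
  (pmin n.+1 = (pmin n).+1 \/ (pmin n.+1).+1 = pmin n) /\
  (forall k : nat, 1 <= k ->
     pmin n <= (pmin (n + k)).+1 /\ pmin (n + k) <= pmin n + k) /\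
  (pmin n.+1 = (pmin n).+1 ->
     forall k : nat, 1 <= k -> pmin n <= pmin (n + k)).
Proof.
move=> n0.
have pm k : 0 < k -> attained k (pmin k) /\ forall p, attained k p -> pmin k <= p.
  by move=> k0; apply: pminP; apply: exists_poly.
have up k : 0 < k -> pmin k.+1 <= pmin k + 1.
  move=> k0; have [[A [pA [sA eA]]] _] := pm k k0.
  have [A' [pA' sA' eA']] := Grow pA.
  have [_ m1] := pm k.+1 isT.
  have := m1 (perimeter A'); rewrite -eA.
  by move=> H; apply: leq_trans (H _) eA'; exists A'; rewrite sA' sA.
have par k : 0 < k -> odd (pmin k) = odd k.
  move=> k0; have [[A [pA [sA eA]]] _] := pm k k0.
  by rewrite -eA -sA perim_parity //; case: pA.
have dn k : 0 < k -> forall j, pmin k <= pmin (k + j) + odd j.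
  move=> k0 j; have [[A [pA [sA eA]]] _] := pm (k + j) ltac:(lia).
  by rewrite -eA; apply: (desc k0 j).1.
have upk k : pmin (n + k) <= pmin n + k.
  elim: k => [|k IH]; first by rewrite !addn0.
  have := up (n + k) ltac:(lia); rewrite [n + k.+1]addnS; lia.
split.
  have h1 := up n n0.
  have h2 := dn n n0 1; rewrite addn1 /= in h2.
  have h3 : pmin n.+1 <> pmin n.
    move=> e; have := par n.+1 isT; rewrite e par //= => /eqP.
    by case: (odd n).
  lia.
split.
  move=> k k0; split; last exact: upk.
  have := dn n n0 k; have := leq_b1 (odd k); lia.
move=> e k k0.
case: (boolP (odd k)) => ok.
  have := dn n.+1 isT k.-1.
  have -> : n.+1 + k.-1 = n + k by lia.
  have : odd k.-1 = false by case: k ok {k0} => //= k' /negbTE.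
  move=> -> /=; rewrite e; lia.
have := dn n n0 k; rewrite (negbTE ok); lia.
Qed.
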